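(* Let $H$ be a connected triangle-free graph with no full star-cutset. If $H$ is a restricted frame graph, then $H$ is either a path or a chandelier.
   Context: A full star-cutset of a connected graph $G$ is a set $N[u]=\{u\}\cup N(u)$ whose removal disconnects $G$. A chandelier is a graph obtained from a tree $T$ by adding a new vertex adjacent to every leaf of $T$. A frame is the boundary of an axis-parallel box $I\times J\subset\mathbb R^2$. A graph $G$ is a restricted frame graph if there is a family of frames $\{F_v : v\in V(G)\}$ with $uv\in E(G)$ iff $F_u\cap F_v\neq\emptyset$, satisfying: (1) corners of a frame do not coincide with any point of another frame; (2) the left side of any frame does not intersect any other frame; (3) if the right side of a frame intersects a second frame, this right side intersects both the top and the bottom side of the second frame; (4) if two frames have non-empty intersection, then no frame is entirely contained in the intersection of the two regions bounded by these two frames. *)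

(* Defs.v *)
From Stdlib Require Import Reals.
From mathcomp Require Import all_boot.

Set Implicit Arguments.
Unset Strict Implicit.
Unset Printing Implicit Defensive.

Definition simple_graph (V : finType) (e : rel V) : Prop :=
  symmetric e /\ irreflexive e.

Definition induced (V : finType) (e : rel V) (S : {set V}) : rel V :=
  [rel x y | [&& x \in S, y \in S & e x y]].

Definition connected_on (V : finType) (e : rel V) (S : {set V}) : Prop :=
  forall x y, x \in S -> y \in S -> connect (induced e S) x y.

Definition connected_graph (V : finType) (e : rel V) : Prop :=
  connected_on e [set: V].

Definition triangle_free (V : finType) (e : rel V) : Prop :=
  forall x y z : V, ~ [&& e x y, e y z & e z x].

Definition closed_nbhd (V : finType) (e : rel V) (u : V) : {set V} :=
  u |: [set v | e u v].

Definition full_star_cutset (V : finType) (e : rel V) (u : V) : Prop :=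
  exists x y, [/\ x \in ~: closed_nbhd e u, y \in ~: closed_nbhd e u &
                  ~~ connect (induced e (~: closed_nbhd e u)) x y].

Definition no_full_star_cutset (V : finType) (e : rel V) : Prop :=
  forall u, ~ full_star_cutset e u.

Definition is_path_graph (V : finType) (e : rel V) : Prop :=
  exists f : V -> 'I_#|V|, bijective f /\
    forall x y, e x y = ((f x).+1 == f y) || ((f y).+1 == f x).

Definition acyclic_on (V : finType) (e : rel V) (S : {set V}) : Prop :=
  forall s : seq V, all (fun x => x \in S) s -> uniq s -> 3 <= size s ->
    ~~ cycle e s.

Definition tree_on (V : finType) (e : rel V) (S : {set V}) : Prop :=
  S != set0 /\ connected_on e S /\ acyclic_on e S.

(* H is a chandelier: there is a vertex z such that H - z is a tree T and
   the neighbours of z are exactly the leaves (degree-1 vertices) of T. *)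
Definition is_chandelier (V : finType) (e : rel V) : Prop :=
  exists z : V,
    tree_on e (~: [set z]) /\
    forall v, v != z ->
      e z v = (#|[set w in ~: [set z] | e v w]| == 1).

Local Open Scope R_scope.

(* the boundary of the box [x1,x2] x [y1,y2], with x1 < x2 and y1 < y2 *)
Record frame := Frame {
  fx1 : R; fx2 : R; fy1 : R; fy2 : R;
  fx_lt : fx1 < fx2; fy_lt : fy1 < fy2 }.

Definition point := (R * R)%type.

Definition in_box (F : frame) (p : point) : Prop :=
  fx1 F <= fst p <= fx2 F /\ fy1 F <= snd p <= fy2 F.

Definition on_frame (F : frame) (p : point) : Prop :=
  in_box F p /\
  (fst p = fx1 F \/ fst p = fx2 F \/ snd p = fy1 F \/ snd p = fy2 F).

Definition left_side (F : frame) (p : point) : Prop :=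
  fst p = fx1 F /\ fy1 F <= snd p <= fy2 F.
Definition right_side (F : frame) (p : point) : Prop :=
  fst p = fx2 F /\ fy1 F <= snd p <= fy2 F.
Definition bottom_side (F : frame) (p : point) : Prop :=
  snd p = fy1 F /\ fx1 F <= fst p <= fx2 F.
Definition top_side (F : frame) (p : point) : Prop :=
  snd p = fy2 F /\ fx1 F <= fst p <= fx2 F.

Definition corner (F : frame) (p : point) : Prop :=
  (fst p = fx1 F \/ fst p = fx2 F) /\ (snd p = fy1 F \/ snd p = fy2 F).

Definition meets (A B : point -> Prop) : Prop := exists p, A p /\ B p.

Local Close Scope R_scope.

Definition restricted_frame_graph (V : finType) (e : rel V) : Prop :=
  exists F : V -> frame,
    (forall u v, u <> v -> (e u v <-> meets (on_frame (F u)) (on_frame (F v)))) /\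
    (* (1) corners of a frame do not lie on another frame *)
    (forall u v, u <> v -> forall p, corner (F u) p -> ~ on_frame (F v) p) /\
    (* (2) the left side of a frame meets no other frame *)
    (forall u v, u <> v -> ~ meets (left_side (F u)) (on_frame (F v))) /\
    (* (3) right side meeting a second frame meets its top and bottom sides *)
    (forall u v, u <> v -> meets (right_side (F u)) (on_frame (F v)) ->
       meets (right_side (F u)) (top_side (F v)) /\
       meets (right_side (F u)) (bottom_side (F v))) /\
    (* (4) no frame inside the intersection of the regions of two
           intersecting frames *)
    (forall u v, u <> v -> meets (on_frame (F u)) (on_frame (F v)) ->
       forall w, ~ (forall p, on_frame (F w) p -> in_box (F u) p /\ in_box (F v) p)).

(* Main.v *)
Require Import Defs.
From Stdlib Require Import Reals.
From mathcomp Require Import all_boot.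
From Stdlib Require Import Lra Classical.

Set Implicit Arguments.
Unset Strict Implicit.
Unset Printing Implicit Defensive.


Open Scope R_scope.

Definition pierce (A B : frame) : Prop :=
  fx1 A < fx1 B /\ fx1 B < fx2 A /\ fx2 A < fx2 B /\ fy1 A < fy1 B /\ fy2 B < fy2 A.
Definition inside (A B : frame) : Prop :=
  fx1 B < fx1 A /\ fx2 A < fx2 B /\ fy1 B < fy1 A /\ fy2 A < fy2 B.

Lemma on_left F x y : x = fx1 F -> fy1 F <= y <= fy2 F -> on_frame F (x,y).
Proof. move=> h1 h2; have := fx_lt F; split; [split; simpl; lra| simpl; lra]. Qed.
Lemma on_right F x y : x = fx2 F -> fy1 F <= y <= fy2 F -> on_frame F (x,y).
Proof. move=> h1 h2; have := fx_lt F; split; [split; simpl; lra| simpl; lra]. Qed.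
Lemma on_bot F x y : y = fy1 F -> fx1 F <= x <= fx2 F -> on_frame F (x,y).
Proof. move=> h1 h2; have := fy_lt F; split; [split; simpl; lra| simpl; lra]. Qed.
Lemma on_top F x y : y = fy2 F -> fx1 F <= x <= fx2 F -> on_frame F (x,y).
Proof. move=> h1 h2; have := fy_lt F; split; [split; simpl; lra| simpl; lra]. Qed.

Lemma mk_meet A B x y : on_frame A (x,y) -> on_frame B (x,y) ->
  meets (on_frame A) (on_frame B).
Proof. by move=> h1 h2; exists (x,y). Qed.

Ltac lr := repeat split; simpl; lra.

Lemma escape A B qx qy : ~ meets (on_frame A) (on_frame B) ->
  on_frame B (qx,qy) -> fx1 A < qx < fx2 A -> fy1 A < qy < fy2 A -> inside B A.
Proof.
move=> nm [[[b1 b2] [b3 b4]] hq] hx hy; simpl in *.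
have XA := fx_lt A; have YA := fy_lt A; have XB := fx_lt B; have YB := fy_lt B.
have Hc : ~ (fx1 B < fx1 A /\ fx2 A < fx2 B /\ fy1 B < fy1 A /\ fy2 A < fy2 B).
  move=> [? [? [? ?]]]; case: hq => [|[|[|]]] ?; lra.
split; [|split; [|split]].
- destruct (Rlt_le_dec (fx1 A) (fx1 B)) as [|h]; first done; exfalso.
  destruct (Rle_lt_dec (fy1 A) (fy1 B)).
    apply: nm; apply: (@mk_meet _ _ (fx1 A) (fy1 B)); [apply: on_left|apply: on_bot]; lra.
  destruct (Rle_lt_dec (fy2 B) (fy2 A)).
    apply: nm; apply: (@mk_meet _ _ (fx1 A) (fy2 B)); [apply: on_left|apply: on_top]; lra.
  destruct (Rle_lt_dec (fx2 B) (fx2 A)).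
    apply: nm; apply: (@mk_meet _ _ (fx2 B) (fy1 A)); [apply: on_bot|apply: on_right]; lra.
  case: hq => [|[|[|]]] ?; lra.
- destruct (Rlt_le_dec (fx2 B) (fx2 A)) as [|h]; first done; exfalso.
  destruct (Rle_lt_dec (fy1 A) (fy1 B)).
    apply: nm; apply: (@mk_meet _ _ (fx2 A) (fy1 B)); [apply: on_right|apply: on_bot]; lra.
  destruct (Rle_lt_dec (fy2 B) (fy2 A)).
    apply: nm; apply: (@mk_meet _ _ (fx2 A) (fy2 B)); [apply: on_right|apply: on_top]; lra.
  destruct (Rle_lt_dec (fx1 A) (fx1 B)).
    apply: nm; apply: (@mk_meet _ _ (fx1 B) (fy1 A)); [apply: on_bot|apply: on_left]; lra.
  case: hq => [|[|[|]]] ?; lra.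
- destruct (Rlt_le_dec (fy1 A) (fy1 B)) as [|h]; first done; exfalso.
  destruct (Rle_lt_dec (fx1 A) (fx1 B)).
    apply: nm; apply: (@mk_meet _ _ (fx1 B) (fy1 A)); [apply: on_bot|apply: on_left]; lra.
  destruct (Rle_lt_dec (fx2 B) (fx2 A)).
    apply: nm; apply: (@mk_meet _ _ (fx2 B) (fy1 A)); [apply: on_bot|apply: on_right]; lra.
  destruct (Rle_lt_dec (fy2 B) (fy2 A)).
    apply: nm; apply: (@mk_meet _ _ (fx1 A) (fy2 B)); [apply: on_left|apply: on_top]; lra.
  case: hq => [|[|[|]]] ?; lra.
- destruct (Rlt_le_dec (fy2 B) (fy2 A)) as [|h]; first done; exfalso.
  destruct (Rle_lt_dec (fx1 A) (fx1 B)).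
    apply: nm; apply: (@mk_meet _ _ (fx1 B) (fy2 A)); [apply: on_top|apply: on_left]; lra.
  destruct (Rle_lt_dec (fx2 B) (fx2 A)).
    apply: nm; apply: (@mk_meet _ _ (fx2 B) (fy2 A)); [apply: on_top|apply: on_right]; lra.
  destruct (Rle_lt_dec (fy1 A) (fy1 B)).
    apply: nm; apply: (@mk_meet _ _ (fx1 A) (fy1 B)); [apply: on_left|apply: on_bot]; lra.
  case: hq => [|[|[|]]] ?; lra.
Qed.

Lemma inside_nomeet A B : inside A B -> ~ meets (on_frame A) (on_frame B).
Proof.
move=> [? [? [? ?]]] [[x y] [[[[? ?] [? ?]] _] [[[? ?] [? ?]] h]]]; simpl in *.
case: h => [|[|[|]]] ?; lra.
Qed.

Lemma inside_open A B x y : inside A B -> on_frame A (x,y) ->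
  fx1 B < x < fx2 B /\ fy1 B < y < fy2 B.
Proof. move=> [? [? [? ?]]] [[[? ?] [? ?]] _]; simpl in *; lra. Qed.

Lemma pierce_meet A B : pierce A B -> meets (on_frame A) (on_frame B).
Proof.
move=> [? [? [? [? ?]]]]; have := fx_lt B; have := fy_lt B => ? ?.
apply: (@mk_meet _ _ (fx2 A) (fy2 B)); [apply: on_right|apply: on_top]; lra.
Qed.

Lemma nested_lt A B C : pierce A C -> pierce B C -> ~ meets (on_frame A) (on_frame B) ->
  fx2 A < fx2 B -> inside A B.
Proof.
move=> [? [? [? [? ?]]]] [? [? [? [? ?]]]] nm hlt.
have XA := fx_lt A; have YA := fy_lt A; have XB := fx_lt B; have YB := fy_lt B;
have YC := fy_lt C.
have h1 : fy1 B < fy1 A.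
  destruct (Rlt_le_dec (fy1 B) (fy1 A)) as [|h]; first done; exfalso.
  apply: nm; apply: (@mk_meet _ _ (fx2 A) (fy1 B)); [apply: on_right|apply: on_bot]; lra.
have h2 : fy2 A < fy2 B.
  destruct (Rlt_le_dec (fy2 A) (fy2 B)) as [|h]; first done; exfalso.
  apply: nm; apply: (@mk_meet _ _ (fx2 A) (fy2 B)); [apply: on_right|apply: on_top]; lra.
have h3 : fx1 B < fx1 A.
  destruct (Rlt_le_dec (fx1 B) (fx1 A)) as [|h]; first done; exfalso.
  apply: nm; apply: (@mk_meet _ _ (fx1 B) (fy2 A)); [apply: on_top|apply: on_left]; lra.
split; lra.
Qed.

Lemma nested A B C : pierce A C -> pierce B C -> ~ meets (on_frame A) (on_frame B) ->
  inside A B \/ inside B A.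
Proof.
move=> hA hB nm.
destruct (total_order_T (fx2 A) (fx2 B)) as [[h|h]|h].
- by left; apply: nested_lt hA hB nm h.
- exfalso; apply: nm; move: hA hB => [? [? [? [? ?]]]] [? [? [? [? ?]]]].
  have YC := fy_lt C.
  apply: (@mk_meet _ _ (fx2 A) (fy1 C)); apply: on_right; lra.
- right; apply: nested_lt hB hA _ h => -[p [h1 h2]]; apply: nm; exists p; done.
Qed.

Section Orient.
Variables A B : frame.
Hypothesis H1A : forall p, corner A p -> ~ on_frame B p.
Hypothesis H1B : forall p, corner B p -> ~ on_frame A p.
Hypothesis H2A : ~ meets (left_side A) (on_frame B).
Hypothesis H3A : meets (right_side A) (on_frame B) ->
       meets (right_side A) (top_side B) /\ meets (right_side A) (bottom_side B).

Lemma right_case : meets (right_side A) (on_frame B) -> pierce A B.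
Proof.
move=> /H3A [[[x1 y1] [[/= r1 r2] [/= t1 t2]]] [[x2 y2] [[/= s1 s2] [/= u1 u2]]]].
have XA := fx_lt A; have YA := fy_lt A; have XB := fx_lt B; have YB := fy_lt B.
have a1 : x1 <> fx1 B.
  move=> h; apply: (H1B (p:=(x1,y1))); [split; simpl; tauto|apply: on_right; lra].
have a2 : x1 <> fx2 B.
  move=> h; apply: (H1B (p:=(x1,y1))); [split; simpl; tauto|apply: on_right; lra].
have a3 : y1 <> fy2 A.
  move=> h; apply: (H1A (p:=(x1,y1))); [split; simpl; tauto|apply: on_top; lra].
have a4 : y2 <> fy1 A.
  move=> h; apply: (H1A (p:=(x2,y2))); [split; simpl; tauto|apply: on_bot; lra].
have b1 : fx1 A < fx1 B.
  destruct (Rlt_le_dec (fx1 A) (fx1 B)) as [|h]; first done; exfalso.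
  apply: H2A; exists (fx1 A, fy2 B); split; [split; simpl; lra|apply: on_top; lra].
split; [lra|split; [lra|split; [lra|split; lra]]].
Qed.
End Orient.

Close Scope R_scope.

Open Scope R_scope.

Lemma orient A B :
  (forall p, corner A p -> ~ on_frame B p) ->
  (forall p, corner B p -> ~ on_frame A p) ->
  ~ meets (left_side A) (on_frame B) ->
  ~ meets (left_side B) (on_frame A) ->
  (meets (right_side A) (on_frame B) ->
       meets (right_side A) (top_side B) /\ meets (right_side A) (bottom_side B)) ->
  (meets (right_side B) (on_frame A) ->
       meets (right_side B) (top_side A) /\ meets (right_side B) (bottom_side A)) ->
  meets (on_frame A) (on_frame B) -> pierce A B \/ pierce B A.
Proof.
move=> H1A H1B H2A H2B H3A H3B [[qx qy] [hA hB]].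
have hA' := hA; have hB' := hB.
move: hA hB => [[[a1 a2] [a3 a4]] ha] [[[b1 b2] [b3 b4]] hb]; simpl in *.
have XA := fx_lt A; have YA := fy_lt A; have XB := fx_lt B; have YB := fy_lt B.
case: ha => [ha|[ha|ha]].
- by exfalso; apply: H2A; exists (qx,qy); split=> //; split; simpl; lra.
- by left; apply: right_case => //; exists (qx,qy); split=> //; split; simpl; lra.
case: hb => [hb|[hb|hb]].
- by exfalso; apply: H2B; exists (qx,qy); split=> //; split; simpl; lra.
- by right; apply: right_case => //; exists (qx,qy); split=> //; split; simpl; lra.
exfalso.
destruct (Rle_lt_dec (fx1 A) (fx1 B)).
- apply: (H1B (fx1 B, qy)).
    split; simpl; [by left|by case: hb; auto].
  split; [split; simpl; lra|simpl; right; right; exact: ha].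
- apply: (H1A (fx1 A, qy)).
    split; simpl; [by left|by case: ha; auto].
  split; [split; simpl; lra|simpl; right; right; exact: hb].
Qed.

Close Scope R_scope.


Lemma connect_inv (T : finType) (Q : T -> Prop) (r : rel T) x y :
  connect r x y -> Q x -> (forall a b, Q a -> r a b -> Q b) -> Q y.
Proof.
move=> /connectP [p hp ->] qx step; elim: p x hp qx => //= a p IH x /andP[h1 h2] qx.
exact: IH h2 (step _ _ qx h1).
Qed.

Lemma upath (T : finType) (r : rel T) x y : connect r x y ->
  exists p, [/\ path r x p, uniq (x :: p) & last x p = y].
Proof. move=> /connectP [p hp ->]; case: (shortenP hp) => p' ? ? _; by exists p'. Qed.

Lemma path_induced_all (T : finType) (e : rel T) (S : {set T}) x p :
  path (induced e S) x p -> all (fun y => y \in S) p.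
Proof.
elim: p x => //= a p IH x /andP[/and3P[_ ha _] hp]; rewrite ha /=; exact: IH hp.
Qed.

Section Comb.
Variables (V : finType) (e : rel V).
Hypothesis esym : symmetric e.
Hypothesis eirr : irreflexive e.

Lemma inN u x : (x \in ~: closed_nbhd e u) = (x != u) && ~~ e u x.
Proof. by rewrite /closed_nbhd !inE negb_or. Qed.

Lemma nofsc_conn u x y : no_full_star_cutset e -> x \in ~: closed_nbhd e u ->
  y \in ~: closed_nbhd e u -> connect (induced e (~: closed_nbhd e u)) x y.
Proof. move=> H hx hy; apply/negPn/negP => hc; apply: (H u); by exists x, y. Qed.

Lemma induced_sym S : symmetric (induced e S).
Proof. move=> a b; rewrite /induced /= (esym a b); by case: (a \in S); case: (b \in S). Qed.

Lemma path_graph_of_seq (s : seq V) : uniq s -> (forall v, v \in s) ->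
  (forall a b, e a b = ((index a s).+1 == index b s) || ((index b s).+1 == index a s)) ->
  is_path_graph e.
Proof.
move=> us cov he.
have cs : #|V| = size s.
  rewrite -(card_uniqP us); apply: eq_card => v; by rewrite cov inE.
have hi : forall v, index v s < #|V| by move=> v; rewrite cs index_mem cov.
pose f v := Ordinal (hi v).
have finj : injective f.
  move=> a b /(congr1 val) /= hab; exact: (index_inj a (cov a) (cov b) hab).
exists f; split.
  by apply: inj_card_bij finj _; rewrite card_ord.
by move=> a b; rewrite he.
Qed.

Lemma path_graph_of_path x0 p : uniq (x0 :: p) -> (forall v, v \in x0 :: p) ->
  path e x0 p ->
  (forall a b, e a b -> ((index a (x0::p)).+1 == index b (x0::p))
                     || ((index b (x0::p)).+1 == index a (x0::p))) ->
  is_path_graph e.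
Proof.
move=> us cov hp h1; apply: (path_graph_of_seq us cov) => a b.
have key : forall c d, (index c (x0::p)).+1 == index d (x0::p) -> e c d.
  move=> c d /eqP hcd.
  have hd : index d (x0::p) < size (x0::p) by rewrite index_mem cov.
  have hc : index c (x0::p) < size p by rewrite -hcd /= ltnS in hd.
  have := (pathP x0 hp) _ hc.
  rewrite (nth_index x0 (cov c)).
  have -> : nth x0 p (index c (x0 :: p)) = nth x0 (x0 :: p) (index d (x0::p)).
    by rewrite -hcd.
  by rewrite (nth_index x0 (cov d)).
apply/idP/idP; first exact: h1.
by case/orP => [/key|/key]; rewrite // esym.
Qed.

Lemma empty_path : ~ (exists v : V, True) -> is_path_graph e.
Proof.
move=> hV; apply: (@path_graph_of_seq [::]) => // v; exfalso; apply: hV; by exists v.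
Qed.

Lemma closed_all (l : V) (Q : V -> Prop) : connected_graph e ->
  Q l -> (forall a b, Q a -> e a b -> Q b) -> forall y, Q y.
Proof.
move=> hc ql step y; apply: (connect_inv (hc l y _ _)); rewrite ?inE //.
by move=> a b qa /and3P[_ _ hab]; exact: step qa hab.
Qed.

Lemma small_case (l : V) :
  connected_graph e -> triangle_free e -> no_full_star_cutset e ->
  (forall a b, e l a -> e l b -> a = b) -> is_path_graph e.
Proof.
move=> hc htf hfsc hl.
have tri : forall x y z, e x y -> e y z -> e z x -> False.
  by move=> x y z h1 h2 h3; apply: (htf x y z); rewrite h1 h2 h3.
case: (classic (exists t, e l t)) => [[t hlt]|hno]; last first.
  have all_l : forall y, y = l.
    apply: (closed_all hc) => // a b -> hab; exfalso; apply: hno; by exists b.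
  apply: (@path_graph_of_path l [::]) => //.
  - by move=> v; rewrite inE (all_l v).
  - by move=> a b; rewrite (all_l a) (all_l b) eirr.
have hlN : forall a, e l a -> a = t by move=> a ha; exact: hl a t ha hlt.
have lt : (l == t) = false by apply/negbTE/eqP => E; rewrite E eirr in hlt.
have tl : (t == l) = false by rewrite eq_sym.
case: (classic (exists x, e t x /\ x != l)) => [[x [htx xl]]|hno]; last first.
  have tN : forall b, e t b -> b = l.
    by move=> b hb; apply/eqP; apply/negPn/negP => nb; apply: hno; exists b.
  have cov : forall y, y = l \/ y = t.
    apply: (closed_all hc); first by left.
    move=> a b [->|->] hab; [right; exact: hlN | left; exact: tN].
  apply: (@path_graph_of_path l [:: t]).
  - by rewrite /= inE lt.
  - by move=> v; rewrite !inE; case: (cov v) => ->; rewrite eqxx ?orbT.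
  - by rewrite /= hlt.
  - move=> a b hab; case: (cov a) => ?; case: (cov b) => ?; subst a b;
      rewrite ?eirr // in hab; by rewrite /= ?lt ?tl ?eqxx.
have xt : (x == t) = false by apply/negbTE/eqP => E; rewrite E eirr in htx.
have tx : (t == x) = false by rewrite eq_sym.
have xl' : (x == l) = false by apply/negbTE.
have lx : (l == x) = false by rewrite eq_sym.
have nxl : e x l = false.
  apply/negbTE/negP => h; rewrite esym in h; move/hlN: h => E; by rewrite E eqxx in xt.
have nlx : e l x = false by rewrite esym.
have cover : forall y, y = l \/ y = x \/ e x y.
  move=> y; case: (boolP (y == l)) => [/eqP->|yl]; first by left.
  case: (boolP (y == x)) => [/eqP->|yx]; first by right; left.
  case: (boolP (e x y)) => hxy; first by right; right.
  exfalso.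
  have : connect (induced e (~: closed_nbhd e x)) l y.
    by apply: nofsc_conn => //; rewrite inN ?lx ?nxl // yx.
  move/connect_inv => /(_ (fun a => a = l)) H.
  move/eqP: yl; apply; apply: H => // a b -> /and3P[_ hb hlb].
  move: hb; rewrite inN (hlN _ hlb) tx /=; by rewrite esym htx.
have tN : forall z, e t z -> z = l \/ z = x.
  move=> z hz; case: (cover z) => [|[]]; try tauto.
  move=> hxz; exfalso; apply: (tri t x z) => //; by rewrite esym.
have yN : forall y, e x y -> y != t -> forall z, e y z -> z = x.
  move=> y hy yt z hz; case: (cover z) => [E|[//|hxz]].
    subst z; rewrite esym in hz; move/hlN: hz => E; by rewrite E eqxx in yt.
  exfalso; apply: (tri x y z) => //; by rewrite esym.
case: (classic (exists y, e x y /\ y != t)) => [[y [hxy yt]]|hno]; last first.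
  have xN : forall b, e x b -> b = t.
    by move=> b hb; apply/eqP; apply/negPn/negP => nb; apply: hno; exists b.
  have cov : forall v, v = l \/ v = t \/ v = x.
    by move=> v; case: (cover v) => [|[|/xN]]; tauto.
  apply: (@path_graph_of_path l [:: t; x]).
  - by rewrite /= !inE lt lx tx.
  - by move=> v; rewrite !inE; case: (cov v) => [|[]] ->; rewrite eqxx ?orbT.
  - by rewrite /= hlt htx.
  - move=> a b hab; case: (cov a) => [|[]] ?; case: (cov b) => [|[]] ?; subst a b;
      rewrite ?eirr ?nxl ?nlx // in hab; by rewrite /= ?lt ?tl ?lx ?xl' ?tx ?xt ?eqxx.
have yuniq : forall y', e x y' -> y' != t -> y' = y.
  move=> y' hy' y't; apply/eqP; apply/negPn/negP => ne; exfalso.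
  have yl : (y == l) = false.
    by apply/negbTE/eqP => E; subst y; rewrite nxl in hxy.
  have y'l : (y' == l) = false.
    by apply/negbTE/eqP => E; subst y'; rewrite nxl in hy'.
  have : connect (induced e (~: closed_nbhd e y)) y' l.
    apply: nofsc_conn => //.
      rewrite inN ne /=; apply/negP => h; rewrite esym in h.
      have := yN _ hy' y't _ h => E; subst y; by rewrite eirr in hxy.
    rewrite inN eq_sym yl /=; apply/negP => h.
    have := yN _ hxy yt _ h => E; by rewrite E eqxx in xl'.
  move/connect_inv => /(_ (fun a => a = y')) H.
  move: y'l; rewrite (H erefl) ?eqxx //.
  move=> a b -> /and3P[_ hb hab]; move: hb; rewrite inN (yN _ hy' y't _ hab).
  by rewrite esym hxy andbF.
have yl : (y == l) = false.
  by apply/negbTE/eqP => E; subst y; rewrite nxl in hxy.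
have ly : (l == y) = false by rewrite eq_sym.
have ty : (t == y) = false by rewrite eq_sym; apply/negbTE.
have yt' : (y == t) = false by apply/negbTE.
have xy : (x == y) = false by apply/negbTE/eqP => E; subst y; rewrite eirr in hxy.
have yx : (y == x) = false by rewrite eq_sym.
have nly : e l y = false by apply/negbTE/negP => /hlN E; by rewrite E eqxx in yt'.
have nyl : e y l = false by rewrite esym.
have nty : e t y = false.
  by apply/negbTE/negP => /tN [E|E]; [rewrite E eqxx in yl | rewrite E eqxx in yx].
have nyt : e y t = false by rewrite esym.
have cov : forall v, v = l \/ v = t \/ v = x \/ v = y.
  move=> v; case: (cover v) => [|[|hv]]; try tauto.
  case: (boolP (v == t)) => [/eqP|vt]; first tauto.
  by right; right; right; apply: yuniq.
apply: (@path_graph_of_path l [:: t; x; y]).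
- by rewrite /= !inE lt lx ly tx ty xy.
- by move=> v; rewrite !inE; case: (cov v) => [|[|[]]] ->; rewrite eqxx ?orbT.
- by rewrite /= hlt htx hxy.
- move=> a b hab; case: (cov a) => [|[|[]]] ?; case: (cov b) => [|[|[]]] ?; subst a b;
    rewrite ?eirr ?nxl ?nlx ?nly ?nyl ?nty ?nyt // in hab;
    by rewrite /= ?lt ?tl ?lx ?xl' ?tx ?xt ?ly ?yl ?ty ?yt' ?xy ?yx ?eqxx.
Qed.


Lemma chandelier_case (h : V) :
  connected_graph e -> triangle_free e -> no_full_star_cutset e ->
  (forall v, exists a b, a != b /\ e v a /\ e v b) ->
  acyclic_on e (~: [set h]) -> is_chandelier e.
Proof.
move=> hc htf hfsc hdeg hac.
have tri : forall x y z, e x y -> e y z -> e z x -> False.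
  by move=> x y z h1 h2 h3; apply: (htf x y z); rewrite h1 h2 h3.
set N := closed_nbhd e h.
have other : forall n, exists w, e n w /\ w != h.
  move=> n; have [a [b [ab [ha hb]]]] := hdeg n.
  case: (boolP (a == h)) => [/eqP E|ah]; last by exists a.
  by exists b; split => //; rewrite -E eq_sym.
have wS : forall n w, e h n -> e n w -> w != h -> w \in ~: N.
  move=> n w hn hw wh; rewrite inN wh /=; apply/negP => hhw.
  by apply: (tri h n w) => //; rewrite esym.
have nh : forall n, e h n -> n != h.
  by move=> n hn; apply/eqP => E; rewrite E eirr in hn.
have NsubH : forall x, x \in ~: N -> x \in ~: [set h].
  by move=> x; rewrite inN !inE => /andP[].
have uniqW : forall n w1 w2, e h n -> w1 \in ~: N -> w2 \in ~: N ->
    e n w1 -> e n w2 -> w1 = w2.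
  move=> n w1 w2 hn h1 h2 e1 e2; apply/eqP/negPn/negP => ne.
  have [p [hp up hl]] := upath (nofsc_conn hfsc h1 h2).
  have hall := path_induced_all hp.
  have nN : n \notin w1 :: p.
    apply/negP => hin.
    have : all (fun y => y \in ~: N) (w1 :: p) by rewrite /= h1 hall.
    move/allP => /(_ n hin); by rewrite inN hn andbF.
  have := hac (n :: w1 :: p).
  have -> : all (fun x => x \in ~: [set h]) (n :: w1 :: p).
    rewrite /=; apply/and3P; split; first by rewrite !inE nh.
      exact: NsubH.
    by apply/allP => y hy; apply: NsubH; move/allP: hall; apply.
  have hu : uniq (n :: w1 :: p) by rewrite cons_uniq nN up.
  move=> /(_ isT hu).
  have sz : 3 <= size (n :: w1 :: p).
    by case: p hp up hl hall {nN hu} => [/= _ _ E|] //; rewrite E eqxx in ne.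
  move=> /(_ sz); rewrite /cycle rcons_cons /= rcons_path e1 /= hl.
  have -> : path e w1 p.
    by apply: sub_path hp => a b /and3P[].
  by rewrite esym e2.
have cs : forall x, x \in ~: [set h] -> exists s, s \in ~: N /\
    connect (induced e (~: [set h])) x s.
  move=> x hx; case: (boolP (e h x)) => hhx.
    have [w [hw wh]] := other x; exists w; split; first exact: wS hhx hw wh.
    by apply: connect1; rewrite /induced /= hx hw !inE wh.
  exists x; split => //; move: hx; rewrite inN !inE => ->; by rewrite hhx.
exists h; split.
  split.
    have [w [hw wh]] := other h; apply/set0Pn; exists w; by rewrite !inE wh.
  split => //.
  move=> x y hx hy.
  have [sx [hsx cx]] := cs x hx; have [sy [hsy cy]] := cs y hy.
  apply: connect_trans cx _.
  rewrite (sym_connect_sym (induced_sym _)) in cy.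
  apply: connect_trans _ cy.
  apply: (connect_sub _ (nofsc_conn hfsc hsx hsy)) => a b /and3P[ha hb hab].
  by apply: connect1; rewrite /induced /= hab !NsubH.
move=> v vh.
case: (boolP (e h v)) => hhv.
  have [w [hw wh]] := other v.
  have -> : [set w0 in ~: [set h] | e v w0] = [set w].
    apply/setP => z; rewrite !inE; apply/andP/eqP.
      move=> [zh hz]; exact: uniqW hhv (wS _ _ hhv hz zh) (wS _ _ hhv hw wh) hz hw.
    by move=> ->; rewrite wh.
  by rewrite cards1.
have [a [b [ab [ha hb]]]] := hdeg v.
have ah : a != h by apply/eqP => E; rewrite E esym (negbTE hhv) in ha.
have bh : b != h by apply/eqP => E; rewrite E esym (negbTE hhv) in hb.
have : 2 <= #|[set w0 in ~: [set h] | e v w0]|.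
  rewrite -[2]/((true).+1) -ab -cards2; apply: subset_leq_card.
  by apply/subsetP => z; rewrite !inE => /orP[]/eqP->; rewrite ?ah ?bh ?ha ?hb.
by case: #|_| => [|[|k]].
Qed.

Lemma combinatorial :
  connected_graph e -> triangle_free e -> no_full_star_cutset e ->
  ((exists v : V, True) -> exists h, acyclic_on e (~: [set h])) ->
  is_path_graph e \/ is_chandelier e.
Proof.
move=> hc htf hfsc hh.
case: (classic (exists v : V, True)) => [hV|hV]; last by left; apply: empty_path.
case: (classic (exists l, forall a b, e l a -> e l b -> a = b)) => [[l hl]|hno].
  by left; apply: (small_case hc htf hfsc hl).
right; have [h hac] := hh hV; apply: (chandelier_case hc htf hfsc _ hac).
move=> v; apply: NNPP => H; apply: hno; exists v => a b ha hb.
apply: NNPP => ab; apply: H; exists a, b; split => //; by apply/eqP.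
Qed.

End Comb.


Lemma exists_min (T : eqType) (l : seq T) (P : T -> Prop) (f : T -> R) :
  (exists v, v \in l /\ P v) ->
  exists m, P m /\ m \in l /\ forall v, v \in l -> P v -> Rle (f m) (f v).
Proof.
elim: l => [[v [//]]|a l IH] hex.
case: (classic (exists v, v \in l /\ P v)) => [h|h].
  have [m [pm [ml hm]]] := IH h.
  case: (classic (P a)) => pa.
    destruct (Rle_lt_dec (f a) (f m)) as [r|r].
      exists a; split => //; split; first by rewrite inE eqxx.
      move=> v; rewrite inE => /orP[/eqP->|vl] pv; first lra.
      have := hm v vl pv; lra.
    exists m; split => //; split; first by rewrite inE ml orbT.
    move=> v; rewrite inE => /orP[/eqP->|vl] pv; first lra.
    exact: hm.
  exists m; split => //; split; first by rewrite inE ml orbT.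
  move=> v; rewrite inE => /orP[/eqP->|vl] pv; first by [].
  exact: hm.
have pa : P a.
  case: hex => v [/[!inE]/orP[/eqP<-//|vl] pv]; exfalso; apply: h; by exists v.
exists a; split => //; split; first by rewrite inE eqxx.
move=> v; rewrite inE => /orP[/eqP->|vl] pv; first lra.
exfalso; apply: h; by exists v.
Qed.

Lemma meets_sym A B : meets A B -> meets B A.
Proof. by move=> [p [h1 h2]]; exists p. Qed.

Section Frames.
Variables (V : finType) (e : rel V) (F : V -> frame).
Hypothesis esym : symmetric e.
Hypothesis eirr : irreflexive e.
Hypothesis Hrep : forall u v, u <> v -> (e u v <-> meets (on_frame (F u)) (on_frame (F v))).
Hypothesis H1 : forall u v, u <> v -> forall p, corner (F u) p -> ~ on_frame (F v) p.
Hypothesis H2 : forall u v, u <> v -> ~ meets (left_side (F u)) (on_frame (F v)).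
Hypothesis H3 : forall u v, u <> v -> meets (right_side (F u)) (on_frame (F v)) ->
       meets (right_side (F u)) (top_side (F v)) /\
       meets (right_side (F u)) (bottom_side (F v)).
Hypothesis htf : triangle_free e.
Hypothesis hfsc : no_full_star_cutset e.

Let tri : forall x y z, e x y -> e y z -> e z x -> False.
Proof. by move=> x y z h1 h2 h3; apply: (htf (x:=x) (y:=y) (z:=z)); apply/and3P. Qed.

Lemma neq_of_e u v : e u v -> u <> v.
Proof. by move=> h E; rewrite E eirr in h. Qed.

Lemma orientV u v : e u v -> pierce (F u) (F v) \/ pierce (F v) (F u).
Proof.
move=> h; have uv := neq_of_e h; have vu : v <> u by auto.
apply: orient; try (apply: H1 || apply: H2 || apply: H3); auto.
exact/(Hrep uv).
Qed.

Lemma pierce_e u v : pierce (F u) (F v) -> e u v.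
Proof.
move=> hp; have uv : u <> v.
  by move=> E; subst; move: hp => [? _]; lra.
by apply/(Hrep uv); apply: pierce_meet.
Qed.

Lemma nomeet u v : u <> v -> ~~ e u v -> ~ meets (on_frame (F u)) (on_frame (F v)).
Proof. by move=> uv /negP ne hm; apply: ne; apply/(Hrep uv). Qed.

Lemma inside_ne u v : inside (F u) (F v) -> u <> v.
Proof. by move=> hi E; subst; move: hi => [? _]; lra. Qed.

Lemma inside_ne_e u v : inside (F u) (F v) -> ~~ e v u.
Proof.
move=> hi; apply/negP => h; have vu : v <> u by move=> E; apply: (inside_ne hi).
apply: (inside_nomeet hi); apply: meets_sym; exact/(Hrep vu).
Qed.

Lemma K v w u : inside (F w) (F v) -> u <> v -> ~~ e v u -> inside (F u) (F v).
Proof.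
move=> hw uv nvu.
have hc : connect (induced e (~: closed_nbhd e v)) w u.
  apply: nofsc_conn => //.
    rewrite inN inside_ne_e // andbT; apply/eqP; exact: inside_ne hw.
  by rewrite inN nvu andbT; apply/eqP.
apply: (connect_inv (Q := fun a => inside (F a) (F v)) hc hw) => a b ha /and3P[_ hb hab].
move: hb; rewrite inN => /andP[/eqP bv nvb].
have ab := neq_of_e hab.
have [[x y] [pa pb]] := (iffLR (Hrep ab)) hab.
have [ox oy] := inside_open ha pa.
exact: (@escape (F v) (F b) x y (nomeet (fun E => bv (Logic.eq_sym E)) nvb) pb ox oy).
Qed.

Lemma find_h : (exists v : V, True) -> exists h, acyclic_on e (~: [set h]).
Proof.
move=> [v0 _].
have ND : exists h, forall a b c, a <> b -> a <> h -> b <> h -> c <> h ->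
    pierce (F a) (F c) -> pierce (F b) (F c) -> False.
  case: (classic (exists z w, inside (F w) (F z))) => [hZ|hZ]; last first.
    exists v0 => a b c ab _ _ _ pa pb.
    have nab : ~~ e a b.
      apply/negP => hab; apply: (tri hab (pierce_e pb)).
      by rewrite esym; apply: pierce_e.
    case: (nested pa pb (nomeet ab nab)) => hi; apply: hZ; by do 2 eexists; exact: hi.
  have [h [[wh hwh] [_ hmin]]] :=
    @exists_min _ (enum V) (fun z => exists w, inside (F w) (F z)) (fun z => fx1 (F z)) 
      (let: ex_intro z hz := hZ in ex_intro _ z (conj (mem_enum _ z) hz)).
  exists h => a b c ab ah bh ch pa pb.
  have sub : forall A B, A <> h -> B <> h -> inside (F A) (F B) -> pierce (F B) (F c) -> False.
    move=> A B Ah Bh hAB pBc.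
    have hm := hmin B (mem_enum _ B) (ex_intro _ A hAB).
    have heB : e h B.
      apply/negPn/negP => nhB.
      have i1 := K hwh Bh nhB.
      have nBh : ~~ e B h by rewrite esym.
      have i2 := K hAB (fun E => Bh (Logic.eq_sym E)) nBh.
      move: i1 i2 => [? _] [? _]; lra.
    case: (orientV heB) => [phB|pBh]; last by move: pBh => [? _]; lra.
    have eBc := pierce_e pBc.
    have nhc : ~~ e h c.
      apply/negP => hhc; apply: (tri heB eBc); by rewrite esym.
    have ic := K hwh ch nhc.
    move: ic phB pBc => [_ [? _]] [_ [_ [? _]]] [_ [_ [? _]]]; lra.
  have nab : ~~ e a b.
    apply/negP => hab; apply: (tri hab (pierce_e pb)).
    by rewrite esym; apply: pierce_e.
  case: (nested pa pb (nomeet ab nab)) => hi.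
    exact: sub ah bh hi pb.
  exact: sub bh ah hi pa.
have [h hND] := ND; exists h.
move=> s hall us hsz; apply/negP => hcyc.
have hne : exists v, v \in s /\ True.
  by case: s hall us hsz hcyc => [|x s0] //= *; exists x; rewrite inE eqxx.
have [c [_ [cs hc]]] := @exists_min _ s (fun _ => True) (fun v => Ropp (fx2 (F v))) hne.
have hin : forall x, x \in s -> x <> h.
  move=> x hx E; move/allP: hall => /(_ x hx); by rewrite E !inE eqxx.
case: (rot_to cs) => i s' hrot.
have cyc : cycle e (c :: s') by rewrite -hrot rot_cycle.
have us' : uniq (c :: s') by rewrite -hrot rot_uniq.
have mem' : forall x, x \in s' -> x \in s.
  by move=> x hx; rewrite -(mem_rot i) hrot inE hx orbT.
have sz' : size (c :: s') = size s by rewrite -hrot size_rot.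
case: s' hrot cyc us' mem' sz' => [|a [|y s3]] hrot cyc us' mem' sz';
  first (by rewrite -sz' in hsz); first (by rewrite -sz' in hsz).
set b := last y s3.
have hb : b \in y :: s3 by apply: mem_last.
have ab : a <> b.
  move=> E; move: us'; rewrite cons_uniq => /andP[_]; rewrite cons_uniq.
  by move=> /andP[/negP H _]; apply: H; rewrite E.
move: cyc; rewrite /cycle rcons_cons /= rcons_path => /and3P[eca _ /andP[_ ebc]].
rewrite -/b in ebc.
have ma : a \in s by apply: mem'; rewrite inE eqxx.
have mb : b \in s by apply: mem'; rewrite inE hb orbT.
have pa : pierce (F a) (F c).
  case: (orientV eca) => // [[_ [_ [? _]]]]; have := hc a ma I; lra.
have pb : pierce (F b) (F c).
  case: (orientV ebc) => // [[_ [_ [? _]]]]; have := hc b mb I; lra.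
exact: (hND a b c ab (hin a ma) (hin b mb) (hin c cs) pa pb).
Qed.

End Frames.


Unset Implicit Arguments.

Theorem lemma3p12 (V : finType) (e : rel V) :
  simple_graph e ->
  connected_graph e ->
  triangle_free e ->
  no_full_star_cutset e ->
  restricted_frame_graph e ->
  is_path_graph e \/ is_chandelier e.
Proof.
move=> [esym eirr] hc htf hfsc [F [Hrep [H1 [H2 [H3 _]]]]].
apply: (combinatorial esym eirr hc htf hfsc).
exact: (find_h esym eirr Hrep H1 H2 H3 htf hfsc).
Qed.
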